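(* Let $\Lambda$ be a finitely aligned left cancellative small category. (1) For $\alpha,\beta\in\Lambda$ with $s(\alpha)=s(\beta)$, we have $\alpha\beta^*\in S_\Lambda^{\mathrm{Iso}}$ if and only if $\alpha\gamma\Lambda\cap\beta\gamma\Lambda\neq\emptyset$ for all $\gamma\in s(\beta)\Lambda$. (2) For $\alpha_i,\beta_i\in\Lambda$, $i=1,\dots,n$, with $s=\bigcup_{i=1}^n\alpha_i\beta_i^*\in S_\Lambda$, we have $s\in S_\Lambda^{\mathrm{Iso}}$ if and only if $\alpha_i\beta_i^*\in S_\Lambda^{\mathrm{Iso}}$ for all $i=1,\dots,n$.
   Context: $\Lambda$ is a small category (objects $\Lambda^0$, range $r$, source $s$), left cancellative, and finitely aligned: for all $\alpha,\beta$, $\alpha\Lambda\cap\beta\Lambda=\bigcup_{f\in F}f\Lambda$ for some finite $F$, where $\alpha\Lambda=\{\alpha\beta:s(\alpha)=r(\beta)\}$. Each $\alpha\in\Lambda$ is the partial bijection $s(\alpha)\Lambda\to\alpha\Lambda$, $\beta\mapsto\alpha\beta$, in the symmetric inverse monoid $\mathcal{I}(\Lambda)$ (composition on largest domain, zero the empty map), with inverse $\alpha^*:\alpha\beta\mapsto\beta$; $S_\Lambda$ is the inverse subsemigroup of $\mathcal{I}(\Lambda)$ generated by these; unions are unions of partial maps. For an inverse semigroup $S$ with natural order ($e\leqslant f$ iff $ef=e$ on idempotents), $S^{\mathrm{Iso}}=\{s\in S:ses^*e\neq0\text{ for every idempotent }0\neq e\leqslant s^*s\}$. *)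

(* Defs.v *)
From Stdlib Require Import List.

Set Implicit Arguments.

(* A small category: morphisms Mor, objects Ob, range r, source s,
   identities, and a composition comp a b (= a b, "first b then a" as
   functions) which is meaningful when src a = rng b. *)
Record SmallCat := {
  Ob : Type;
  Mor : Type;
  rng : Mor -> Ob;
  src : Mor -> Ob;
  idm : Ob -> Mor;
  comp : Mor -> Mor -> Mor;
  rng_idm : forall v, rng (idm v) = v;
  src_idm : forall v, src (idm v) = v;
  rng_comp : forall a b, src a = rng b -> rng (comp a b) = rng a;
  src_comp : forall a b, src a = rng b -> src (comp a b) = src b;
  comp_idl : forall a, comp (idm (rng a)) a = a;
  comp_idr : forall a, comp a (idm (src a)) = a;
  comp_assoc : forall a b c, src a = rng b -> src b = rng c ->
     comp a (comp b c) = comp (comp a b) c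
}.

Arguments rng {s}.
Arguments src {s}.
Arguments idm {s}.
Arguments comp {s}.

Section Cat.
Variable C : SmallCat.

Definition rightIdeal (a : Mor C) : Mor C -> Prop :=
  fun x => exists b, src a = rng b /\ x = comp a b.

Definition left_cancellative : Prop :=
  forall a b c : Mor C, src a = rng b -> src a = rng c -> comp a b = comp a c -> b = c.

Definition finitely_aligned : Prop :=
  forall a b : Mor C, exists F : list (Mor C),
    forall x, (rightIdeal a x /\ rightIdeal b x) <-> exists f, In f F /\ rightIdeal f x.

(* Partial maps Lambda -> Lambda, represented by their graphs: R x y means x |-> y. *)
Definition pmap := Mor C -> Mor C -> Prop.

Definition peq (f g : pmap) : Prop := forall x y, f x y <-> g x y.

Definition pmul (f g : pmap) : pmap := fun x z => exists y, g x y /\ f y z.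

Definition pinv (f : pmap) : pmap := fun x y => f y x.

Definition pzero : pmap := fun _ _ => False.

Definition pnonzero (f : pmap) : Prop := exists x y, f x y.

Definition punion (f g : pmap) : pmap := fun x y => f x y \/ g x y.

Definition pgen (a : Mor C) : pmap := fun x y => src a = rng x /\ y = comp a x.

Definition pab (a b : Mor C) : pmap := pmul (pgen a) (pinv (pgen b)).

(* The inverse subsemigroup generated by the alpha's: the subsemigroup
   generated by the alpha's and their inverses alpha^*. *)
Inductive SLgen : pmap -> Prop :=
  | SLgen_gen : forall a, SLgen (pgen a)
  | SLgen_inv : forall a, SLgen (pinv (pgen a))
  | SLgen_mul : forall f g, SLgen f -> SLgen g -> SLgen (pmul f g).

Definition inSL (f : pmap) : Prop := exists g, SLgen g /\ peq f g.

Definition pidempotent (e : pmap) : Prop := peq (pmul e e) e.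

Definition ple (e f : pmap) : Prop := peq (pmul e f) e.

Definition inSLIso (s : pmap) : Prop :=
  inSL s /\
  forall e, inSL e -> pidempotent e -> pnonzero e -> ple e (pmul (pinv s) s) ->
     pnonzero (pmul (pmul (pmul s e) (pinv s)) e).

Fixpoint bigunion (n : nat) (a b : nat -> Mor C) : pmap :=
  match n with
  | O => pzero
  | S m => punion (bigunion m a b) (pab (a m) (b m))
  end.

End Cat.

Arguments rightIdeal {C}.
Arguments pgen {C}.
Arguments pab {C}.
Arguments inSL {C}.
Arguments inSLIso {C}.
Arguments bigunion {C}.
Arguments pmul {C}.
Arguments pinv {C}.
Arguments peq {C}.
Arguments pnonzero {C}.
Arguments ple {C}.
Arguments pidempotent {C}.
Arguments punion {C}.
Arguments pzero {C}.

(* Main.v *)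
Require Import Defs.
From Stdlib Require Import List.
Set Implicit Arguments.

Definition fnl {C : SmallCat} (g : pmap C) := forall x y y', g x y -> g x y' -> y = y'.
Definition inj {C : SmallCat} (g : pmap C) := forall x x' y, g x y -> g x' y -> x = x'.
Definition srcp {C : SmallCat} (g : pmap C) := forall x y, g x y -> src x = src y.
Definition eqv {C : SmallCat} (g : pmap C) := forall x y d, g x y -> src x = rng d -> g (comp x d) (comp y d).

Lemma SLgen_props (C : SmallCat) (Hlc : left_cancellative C) g :
  @SLgen C g -> fnl g /\ inj g /\ srcp g /\ eqv g.
Proof.
  induction 1 as [a|a|f g _ [Ff [If [Sf Ef]]] _ [Fg [Ig [Sg Eg]]]];
  unfold fnl, inj, srcp, eqv, pgen, pinv, pmul.
  - split; [|split; [|split]].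
    + intros x y y' [_ ->] [_ ->]; reflexivity.
    + intros x x' y [H1 ->] [H2 E]. eapply Hlc; eauto.
    + intros x y [H ->]. rewrite src_comp; auto.
    + intros x y d [H ->] Hd. split.
      * rewrite rng_comp; auto.
      * symmetry; apply comp_assoc; auto.
  - split; [|split; [|split]].
    + intros x y y' [H1 ->] [H2 E]. eapply Hlc; eauto.
    + intros x x' y [_ ->] [_ ->]; reflexivity.
    + intros x y [H ->]. rewrite src_comp; auto.
    + intros x y d [H ->] Hd. rewrite src_comp in Hd by auto. split.
      * rewrite rng_comp; auto.
      * symmetry; apply comp_assoc; auto.
  - split; [|split; [|split]].
    + intros x y y' [m [H1 H2]] [m' [H3 H4]].
      assert (m = m') by (eapply Fg; eauto). subst. eapply Ff; eauto.
    + intros x x' y [m [H1 H2]] [m' [H3 H4]].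
      assert (m = m') by (eapply If; eauto). subst. eapply Ig; eauto.
    + intros x y [m [H1 H2]]. rewrite (Sg _ _ H1). eauto.
    + intros x y d [m [H1 H2]] Hd. exists (comp m d). split.
      * eauto.
      * apply Ef; auto. rewrite <- (Sg _ _ H1); auto.
Qed.

Lemma inSL_props (C : SmallCat) (Hlc : left_cancellative C) (f : pmap C) :
  inSL f -> fnl f /\ inj f /\ srcp f /\ eqv f.
Proof.
  intros [g [Hg Hp]]. destruct (SLgen_props Hlc Hg) as [F [I [S E]]].
  unfold fnl, inj, srcp, eqv in *. repeat split; intros.
  - apply Hp in H; apply Hp in H0; eauto.
  - apply Hp in H; apply Hp in H0; eauto.
  - apply Hp in H; eauto.
  - apply Hp. apply Hp in H; eauto.
Qed.

Lemma idem_id (C : SmallCat) (e : pmap C) : fnl e -> inj e -> pidempotent e ->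
  forall x y, e x y -> x = y.
Proof.
  intros F I P x y H. apply P in H as H'. destruct H' as [m [H1 H2]].
  assert (m = y) by (eapply F; eauto). subst. eapply I; eauto.
Qed.

Lemma bigunion_iff (C : SmallCat) n (a b : nat -> Mor C) x y :
  bigunion n a b x y <-> exists i, (i < n)%nat /\ pab (a i) (b i) x y.
Proof.
  induction n; simpl; unfold punion, pzero.
  - split; [tauto|]. intros [i [Hi _]]. inversion Hi.
  - rewrite IHn. split.
    + intros [[i [Hi H]]|H]; eauto.
    + intros [i [Hi H]]. inversion Hi; subst; eauto.
Qed.

Lemma inSL_pab (C : SmallCat) (a b : Mor C) : inSL (pab a b).
Proof. exists (pab a b). split. constructor; constructor. intros x y; tauto. Qed.

Lemma inSL_mul (C : SmallCat) (f g : pmap C) : inSL f -> inSL g -> inSL (pmul f g).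
Proof.
  intros [f' [Hf Pf]] [g' [Hg Pg]]. exists (pmul f' g'). split. constructor; auto.
  unfold pmul; intros x y; split; intros [m [H1 H2]]; exists m;
    split; first [apply Pf | apply Pg]; auto.
Qed.

Lemma inSL_ss (C : SmallCat) (a b : Mor C) : inSL (pmul (pinv (pab a b)) (pab a b)).
Proof.
  exists (pmul (pmul (pgen b) (pinv (pgen a))) (pab a b)). split.
  - repeat constructor.
  - unfold pmul, pinv, pab, pgen. intros x y. firstorder.
Qed.

Lemma p1_fwd (C : SmallCat) (Hlc : left_cancellative C) (a b : Mor C) (Hab : src a = src b) :
  inSLIso (pab a b) -> forall g : Mor C, rng g = src b ->
        exists x, rightIdeal (comp a g) x /\ rightIdeal (comp b g) x.
Proof.
  intros [_ Iso] g Hg.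
  assert (Hsbg : src (comp b g) = src g) by (apply src_comp; auto).
  assert (Hsag : src (comp a g) = src g) by (apply src_comp; congruence).
  specialize (Iso (pab (comp b g) (comp b g)) (inSL_pab _ _ _)).
  destruct Iso as [X [Y [y1 [He1 [y2 [Hs1 [y3 [He2 Hs2]]]]]]]].
  - unfold pidempotent, peq, pmul, pab, pinv, pgen. intros x y; split.
    + intros [m [[z [[Hz1 Hz2] [Hz3 Hz4]]] [z' [[Hz1' Hz2'] [Hz3' Hz4']]]]].
      exists z'. subst. repeat split; auto.
    + intros [z [[Hz1 Hz2] [Hz3 Hz4]]]. exists x. split; exists z; subst; auto.
  - exists (comp b g), (comp b g).
    unfold pab, pmul, pinv, pgen. exists (idm (src (comp b g))).
    rewrite rng_idm, comp_idr. auto.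
  - unfold ple, peq, pmul, pab, pinv, pgen. intros x y; split.
    + intros [w [[u [[z1 [[H1 H2] [H3 H4]]] [z2 [[H5 H6] [H7 H8]]]]] Hwy]].
      assert (z1 = z2) by (subst; eapply Hlc; eauto). subst. auto.
    + intros [z [[Hz1 Hz2] [Hz3 Hz4]]]. exists x. split; [|exists z; auto].
      assert (Hr : rng (comp g z) = rng g) by (apply rng_comp; congruence).
      exists (comp a (comp g z)). split; exists (comp g z); repeat split; auto;
        try congruence.
      subst. symmetry; apply comp_assoc; congruence.
      rewrite Hz2; symmetry; apply comp_assoc; congruence.
  - unfold pmul, pab, pinv, pgen in *.
    destruct He1 as [z1 [[H1 H2] [H3 H4]]].
    destruct Hs1 as [w [[H5 H6] [H7 H8]]].
    destruct He2 as [z2 [[H9 H10] [H11 H12]]].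
    assert (Hr : rng (comp g z2) = rng g) by (apply rng_comp; congruence).
    assert (w = comp g z2).
    { eapply Hlc; [| |rewrite <- H6, H10; symmetry; apply comp_assoc]; congruence. }
    subst w. exists y1. split.
    + exists z2. split; [congruence|]. rewrite H8. apply comp_assoc; congruence.
    + exists z1. split; auto.
Qed.

Lemma p1_bwd (C : SmallCat) (Hlc : left_cancellative C) (a b : Mor C) (Hab : src a = src b) :
  (forall g : Mor C, rng g = src b ->
        exists x, rightIdeal (comp a g) x /\ rightIdeal (comp b g) x) -> inSLIso (pab a b).
Proof.
  intros Hc. split; [apply (inSL_pab C)|]. intros e HeSL Hid [x0 [y0 H0]] Hple.
  destruct (inSL_props Hlc HeSL) as [Fe [Ie [Se Ee]]].
  assert (x0 = y0) by (eapply (idem_id Fe Ie Hid); eassumption). subst y0.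
  pose proof H0 as H0'. apply Hple in H0'.
  destruct H0' as [w [[u [Hsxu Hswu]] _]].
  destruct Hsxu as [z [[Hz1 Hz2] [Hz3 Hz4]]].
  destruct (Hc z (eq_sym Hz1)) as [x' [[d [Hd Hx1]] [d' [Hd' Hx2]]]].
  assert (Hszd : src z = rng d) by (rewrite <- Hd; symmetry; apply src_comp; auto).
  assert (Hszd' : src z = rng d') by (rewrite <- Hd'; symmetry; apply src_comp; auto).
  assert (Hx0 : src x0 = src z) by (subst x0; apply src_comp; auto).
  assert (E1 : e x' x').
  { rewrite Hx2. subst x0. apply Ee; auto; congruence. }
  assert (E2 : e (comp b (comp z d)) (comp b (comp z d))).
  { rewrite comp_assoc by auto. subst x0. apply Ee; auto; congruence. }
  assert (Hr : rng (comp z d) = rng z) by (apply rng_comp; auto).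
  assert (S1 : pab a b (comp b (comp z d)) x').
  { exists (comp z d). split; split; auto; try congruence.
    rewrite Hx1. symmetry. apply comp_assoc; auto. }
  exists x', x', x'. split; auto.
  exists (comp b (comp z d)). split; auto.
  exists (comp b (comp z d)). split; auto.
Qed.

Lemma p2 (C : SmallCat) (Hlc : left_cancellative C) n (a b : nat -> Mor C) :
  inSL (bigunion n a b) ->
  (inSLIso (bigunion n a b) <-> forall i, (i < n)%nat -> inSLIso (pab (a i) (b i))).
Proof.
  intros HsSL. destruct (inSL_props Hlc HsSL) as [Fs [Is _]].
  split.
  - intros [_ Iso] i Hi. split; [apply (inSL_pab C)|].
    intros e HeSL Hid Hnz Hple.
    destruct (inSL_props Hlc HeSL) as [Fe [Ie _]].
    assert (Hple' : ple e (pmul (pinv (bigunion n a b)) (bigunion n a b))).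
    { intros x y; split.
      - intros [w [[u [H1 H2]] Hwy]]. unfold pinv in H2.
        assert (x = w) by (eapply Is; eauto). subst; auto.
      - intros Hxy. pose proof Hxy as H'. apply Hple in H'.
        destruct H' as [w [[u [H1 H2]] Hwy]]. exists w; split; auto.
        exists u; split; apply bigunion_iff; eauto. }
    destruct (Iso e HeSL Hid Hnz Hple') as [X [Y [y1 [He1 [y2 [Hs1 [y3 [He2 Hs2]]]]]]]].
    assert (X = y1) by (eapply (idem_id Fe Ie Hid); eassumption). subst X.
    assert (y2 = y3) by (eapply (idem_id Fe Ie Hid); eassumption). subst y3.
    pose proof He2 as H'. apply Hple in H'.
    destruct H' as [w [[u [H1 H2]] _]].
    assert (u = y1).
    { apply (Fs y2); [apply bigunion_iff; eauto | exact Hs1]. }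
    subst u.
    exists y1, y1, y1. split; auto. exists y2. split; auto. exists y2. split; auto.
  - intros Hall. split; auto. intros e HeSL Hid [x0 [y0 H0]] Hple.
    destruct (inSL_props Hlc HeSL) as [Fe [Ie _]].
    assert (x0 = y0) by (eapply (idem_id Fe Ie Hid); eassumption). subst y0.
    pose proof H0 as H'. apply Hple in H'.
    destruct H' as [w [[u [H1 H2]] _]].
    apply bigunion_iff in H1. destruct H1 as [j [Hj Hju]].
    destruct (Hall j Hj) as [_ Iso].
    destruct (inSL_props Hlc (inSL_pab C (a j) (b j))) as [Fj [Ij _]].
    set (sj := pab (a j) (b j)) in *.
    set (e' := pmul e (pmul (pinv sj) sj)).
    assert (K1 : forall x y, e' x y -> e x y /\ exists u, sj x u).
    { intros x y [w' [[u' [K1 K2]] K3]]. unfold pinv in K2.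
      assert (x = w') by (eapply Ij; eauto). subst. eauto. }
    assert (K2 : forall x y, e x y -> (exists u, sj x u) -> e' x y).
    { intros x y Hxy [u' Hu']. exists x. split; auto. exists u'. split; auto. }
    assert (HeSL' : inSL e') by (apply inSL_mul; auto; apply inSL_ss).
    specialize (Iso e' HeSL').
    destruct Iso as [X [Y [y1 [He1 [y2 [Hs1 [y3 [He2 Hs2]]]]]]]].
    + intros x y; split.
      * intros [m [M1 M2]]. apply K1 in M1 as [M1 [u' M3]]. apply K1 in M2 as [M2 _].
        assert (x = m) by (eapply (idem_id Fe Ie Hid); eassumption). subst. apply K2; eauto.
      * intros Hxy. pose proof Hxy as Hxy'. apply K1 in Hxy' as [Hxy' _].
        assert (x = y) by (eapply (idem_id Fe Ie Hid); eassumption). subst. exists y; auto.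
    + exists x0, x0. apply K2; eauto.
    + intros x y; split.
      * intros [w' [[u' [M1 M2]] M3]]. unfold pinv in M2.
        assert (x = w') by (eapply Ij; eauto). subst. auto.
      * intros Hxy. pose proof Hxy as Hxy'. apply K1 in Hxy' as [_ [u' Hu']].
        exists x. split; auto. exists u'. split; auto.
    + apply K1 in He1 as [He1 _]. apply K1 in He2 as [He2 _].
      exists X, Y, y1. split; auto. exists y2. split.
      * unfold pinv in *. apply bigunion_iff; eauto.
      * exists y3. split; auto. apply bigunion_iff; eauto.
Qed.

Theorem lemma4p3 (C : SmallCat) (Hlc : left_cancellative C) (Hfa : finitely_aligned C) :
  (forall a b : Mor C, src a = src b ->
     (inSLIso (pab a b) <->
      forall g : Mor C, rng g = src b ->
        exists x, rightIdeal (comp a g) x /\ rightIdeal (comp b g) x))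
  /\
  (forall (n : nat) (a b : nat -> Mor C),
     inSL (bigunion n a b) ->
     (inSLIso (bigunion n a b) <-> forall i, (i < n)%nat -> inSLIso (pab (a i) (b i)))).
Proof.
  split.
  - intros a b Hab. split; [apply p1_fwd | apply p1_bwd]; auto.
  - intros n a b H. apply p2; auto.
Qed.
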